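(* The sequence $(f_n)_{n\ge 1}$ is strictly decreasing, i.e. $f_{n+1}<f_n$ for every integer $n\ge 1$.
   Context: Let $e(x)=(1+x)^{1/x}$ for $x>-1$, $x\neq 0$, and $e(0)=\mathrm{e}$ (the base of the natural logarithm). For $x\in(-1,1)$ one has the Maclaurin expansion $e(x)=\mathrm{e}\bigl(1+\sum_{k=1}^\infty e_k x^k\bigr)$ with $e_0=1$ (so $e_1=-\tfrac12$, $e_2=\tfrac{11}{24}$, $e_3=-\tfrac7{16},\dots$). Equivalently, for $k\ge1$, $e_k=\mathrm{e}^{-1}\sum_{i=1}^\infty \frac{S_1(k+i,i)}{(k+i)!}$, where $S_1(p,q)$ are the (signed) Stirling numbers of the first kind, defined by $S_1(p,p)=1$, $S_1(p,q)=0$ for $p<q$, and $S_1(p+1,q)=-pS_1(p,q)+S_1(p,q-1)$; the sign of $S_1(p,q)$ is $(-1)^{p-q}$. Define $f_k=(-1)^k e_k$ for $k\ge 0$. *)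

(* Defs.v *)
From Stdlib Require Import Reals ZArith Arith Lra Lia ClassicalEpsilon.
Open Scope R_scope.

Fixpoint stirling1 (p q : nat) : Z :=
  match p with
  | O => match q with O => 1%Z | S _ => 0%Z end
  | S p' => (- Z.of_nat p' * stirling1 p' q
             + match q with O => 0%Z | S q' => stirling1 p' q' end)%Z
  end.

Definition e_term (k : nat) (i : nat) : R :=
  IZR (stirling1 (k + S i) (S i)) / INR (fact (k + S i)).

(* e_k = e^{-1} * sum_{i>=1} S_1(k+i,i)/(k+i)!  for k >= 1, and e_0 = 1.
   The sum is the (unique) limit of the series, chosen by epsilon. *)
Definition e_coef (k : nat) : R :=
  match k with
  | O => 1
  | S _ => exp (-1) *
      epsilon (inhabits 0) (fun l => infinite_sum (e_term k) l)
  end.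

Definition f_coef (k : nat) : R := (-1) ^ k * e_coef k.

(* Main.v *)
Require Import Defs.
From Stdlib Require Import Reals Arith Lra Lia ClassicalEpsilon.
Open Scope R_scope.

Fixpoint sumN (f : nat -> R) (n : nat) : R :=
  match n with O => 0 | S n' => sumN f n' + f n' end.

Lemma sumN_ext f g n : (forall k, (k < n)%nat -> f k = g k) -> sumN f n = sumN g n.
Proof. induction n; simpl; intros H; auto. rewrite IHn by (intros; apply H; lia). rewrite H by lia; auto. Qed.

Lemma sumN_S f n : sumN f (S n) = sumN f n + f n.
Proof. reflexivity. Qed.

Lemma sumN_lin a b f g n : sumN (fun k => a * f k + b * g k) n = a * sumN f n + b * sumN g n.
Proof. induction n; simpl; [ring|]. rewrite IHn; ring. Qed.

Lemma sumN_first f n : sumN f (S n) = f O + sumN (fun k => f (S k)) n.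
Proof. induction n; simpl in *; [ring|]. rewrite IHn; ring. Qed.

Lemma sumN_split f a b : sumN f (a + b) = sumN f a + sumN (fun k => f (a + k)%nat) b.
Proof. induction b; simpl; [rewrite Nat.add_0_r; ring|]. rewrite Nat.add_succ_r; simpl. rewrite IHb; ring. Qed.

Lemma sumN_zero f n : (forall k, (k < n)%nat -> f k = 0) -> sumN f n = 0.
Proof. induction n; simpl; intros H; [auto|]. rewrite IHn, H; [ring|lia|intros; apply H; lia]. Qed.

Lemma sumN_mul c f n : c * sumN f n = sumN (fun k => c * f k) n.
Proof. induction n; simpl; [ring|]. rewrite <- IHn; ring. Qed.

Lemma sumN_plus f g n : sumN f n + sumN g n = sumN (fun k => f k + g k) n.
Proof. induction n; simpl; [ring|]. rewrite <- IHn; ring. Qed.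

Lemma sumN_minus f g n : sumN f n - sumN g n = sumN (fun k => f k - g k) n.
Proof. induction n; simpl; [ring|]. rewrite <- IHn; ring. Qed.

Lemma sumN_nonneg f n : (forall k, (k < n)%nat -> 0 <= f k) -> 0 <= sumN f n.
Proof. induction n; simpl; intros H; [lra|]. assert (0 <= f n) by (apply H; lia). assert (0 <= sumN f n) by (apply IHn; intros; apply H; lia). lra. Qed.

Definition lam (j : nat) : R := match j with O => 0 | S _ => / INR j end.

Lemma INR_lam j : INR j * lam j = match j with O => 0 | S _ => 1 end.
Proof. destruct j; [simpl; ring|]. change (INR (S j) * / INR (S j) = 1). apply Rinv_r. apply not_0_INR; lia. Qed.

Fixpoint ell (i : nat) : nat -> R :=
  match i with
  | O => fun m => match m with O => 1 | S _ => 0 end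
  | S i' => fun m => / INR (S i') * sumN (fun k => ell i' k * lam (m - k)) (S m)
  end.

Definition Kprop i := forall m,
  sumN (fun k => INR k * ell i k * lam (S m - k)) (S (S m)) =
  sumN (fun k => INR k * ell i k * lam (m - k)) (S m) + INR i * ell i m.

Lemma K0 : Kprop 0.
Proof.
  intro m. rewrite !sumN_zero; [simpl; ring| |];
  intros [|k] _; simpl; ring.
Qed.

Lemma conv_split a m : INR m * sumN (fun k => a k * lam (m - k)) (S m) =
  sumN a m + sumN (fun k => INR k * a k * lam (m - k)) (S m).
Proof.
  replace (sumN a m) with (sumN (fun k => a k * (INR (m - k) * lam (m - k))) (S m)).
  2:{ simpl sumN at 1. rewrite Nat.sub_diag. simpl (INR 0).
      rewrite Rmult_0_l, Rmult_0_r, Rplus_0_r. apply sumN_ext. intros k Hk.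
      replace (m - k)%nat with (S (m - k - 1)) by lia. rewrite INR_lam. ring. }
  rewrite sumN_mul, sumN_plus. apply sumN_ext. intros k Hk.
  replace (INR m) with (INR (m - k) + INR k) at 1.
  2:{ rewrite minus_INR by lia. ring. } ring.
Qed.

Lemma Rp_of_K i : Kprop i -> forall m,
  INR (S m) * ell (S i) (S m) = INR m * ell (S i) m + ell i m.
Proof.
  intros K m. cbv beta iota delta [ell]; fold ell.
  set (a := ell i).
  assert (HS : INR (S i) <> 0) by (apply not_0_INR; lia).
  assert (E1 := conv_split a (S m)).
  assert (E2 := conv_split a m).
  assert (K1 := K m). fold a in K1.
  assert (E3 : sumN a (S m) = sumN a m + a m) by reflexivity.
  replace (INR (S m) * (/ INR (S i) * sumN (fun k => a k * lam (S m - k)) (S (S m))))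
    with (/ INR (S i) * (INR (S m) * sumN (fun k => a k * lam (S m - k)) (S (S m)))) by ring.
  replace (INR m * (/ INR (S i) * sumN (fun k => a k * lam (m - k)) (S m)))
    with (/ INR (S i) * (INR m * sumN (fun k => a k * lam (m - k)) (S m))) by ring.
  rewrite E1, E2, K1, E3. rewrite (S_INR i) in *. field. exact HS.
Qed.

Lemma Kall : forall i, Kprop i.
Proof.
  induction i. apply K0.
  intro m. rewrite sumN_first. simpl (INR 0). rewrite Rmult_0_l, Rmult_0_l, Rplus_0_l.
  assert (R := Rp_of_K i IHi).
  transitivity (sumN (fun k => INR k * ell (S i) k * lam (m - k) + ell i k * lam (m - k)) (S m)).
  { apply sumN_ext. intros k _. simpl (S m - S k)%nat. rewrite R. ring. }
  rewrite <- sumN_plus. f_equal.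
  cbv beta iota delta [ell]; fold ell. field. apply not_0_INR; lia.
Qed.

Lemma Rp i m : INR (S m) * ell (S i) (S m) = INR m * ell (S i) m + ell i m.
Proof. apply Rp_of_K, Kall. Qed.

Lemma ell_low : forall i m, (m < i)%nat -> ell i m = 0.
Proof.
  induction i; intros m Hm; [lia|].
  cbv beta iota delta [ell]; fold ell.
  rewrite sumN_zero; [ring|]. intros k Hk.
  destruct (Nat.eq_dec k i) as [->|Hne].
  - replace (m - i)%nat with 0%nat by lia. simpl. ring.
  - rewrite IHi by lia. ring.
Qed.

Lemma stir_S0 p : stirling1 (S p) 0 = 0%Z.
Proof. induction p; simpl in *; [reflexivity|]. rewrite IHp. lia. Qed.

Lemma ell_stir : forall m i, ell i m = (-1) ^ (m + i) * IZR (stirling1 m i) / INR (fact m).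
Proof.
  induction m; intros i.
  - destruct i; simpl; [field|]. unfold Rdiv; ring.
  - destruct i.
    + rewrite stir_S0. simpl. unfold Rdiv. ring.
    + assert (R := Rp i m). rewrite (IHm (S i)), (IHm i) in R.
      change (stirling1 (S m) (S i)) with (- Z.of_nat m * stirling1 m (S i) + stirling1 m i)%Z.
      rewrite plus_IZR, mult_IZR, opp_IZR, <- INR_IZR_INZ.
      replace (S m + S i)%nat with (S (S (m + i))) by lia.
      replace (m + S i)%nat with (S (m + i)) in R by lia.
      rewrite fact_simpl, mult_INR.
      assert (HF : INR (fact m) <> 0) by apply INR_fact_neq_0.
      assert (HS : INR (S m) <> 0) by (apply not_0_INR; lia).
      apply (Rmult_eq_reg_l (INR (S m))); [|exact HS].
      rewrite R. simpl pow. field. split; assumption.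
Qed.

Lemma ell_diag i : ell i i = / INR (fact i).
Proof.
  induction i. simpl; field.
  assert (R := Rp i i). rewrite (ell_low (S i) i) in R by lia. rewrite IHi in R.
  rewrite fact_simpl, mult_INR.
  assert (HF : INR (fact i) <> 0) by apply INR_fact_neq_0.
  assert (HS : INR (S i) <> 0) by (apply not_0_INR; lia).
  apply (Rmult_eq_reg_l (INR (S i))); [|exact HS]. rewrite R. field. split; assumption.
Qed.

Definition gam (j : nat) : R := / INR (S j).

Lemma ell_M i n : INR (S i) * ell (S i) (S (n + i)) =
  sumN (fun l => ell i (l + i) * gam (n - l)) (S n).
Proof.
  cbv beta iota delta [ell]; fold ell.
  rewrite <- Rmult_assoc, Rinv_r, Rmult_1_l by (apply not_0_INR; lia).
  replace (S (S (n + i))) with (i + S (S n))%nat by lia.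
  rewrite sumN_split. rewrite sumN_zero.
  2:{ intros k Hk. rewrite ell_low by lia. ring. }
  rewrite Rplus_0_l, sumN_S.
  replace (S (n + i) - (i + S n))%nat with 0%nat by lia. simpl (lam 0).
  rewrite Rmult_0_r, Rplus_0_r. apply sumN_ext. intros k Hk.
  rewrite (Nat.add_comm i k). replace (S (n + i) - (k + i))%nat with (S (n - k)) by lia.
  reflexivity.
Qed.

Lemma ell_I n i : INR (S (n + i)) * ell (S i) (S (n + i)) = sumN (fun l => ell i (l + i)) (S n).
Proof.
  induction n.
  - simpl (0 + i)%nat. rewrite Rp, (ell_low (S i) i) by lia. simpl. ring.
  - change (S n + i)%nat with (S (n + i)). rewrite Rp, IHn.
    rewrite (sumN_S _ (S n)). reflexivity.
Qed.

Lemma ell_C n i : INR n * ell (S i) (S (n + i)) =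
  sumN (fun l => ell i (l + i) * (1 - gam (n - l))) n.
Proof.
  assert (A := ell_I n i). assert (B := ell_M i n).
  replace (INR n) with (INR (S (n + i)) - INR (S i)) by (rewrite !S_INR, plus_INR; ring).
  rewrite Rmult_minus_distr_r, A, B, sumN_minus.
  rewrite sumN_S, Nat.sub_diag. unfold gam at 2. simpl (INR 1).
  rewrite Rinv_1. replace (ell i (n + i) - ell i (n + i) * 1) with 0 by ring.
  rewrite Rplus_0_r. apply sumN_ext. intros; ring.
Qed.

Lemma sfr_shift f N : sum_f_R0 (fun i => f (S i)) N = sum_f_R0 f (S N) - f O.
Proof. induction N; simpl; [ring|]. rewrite IHN; simpl; ring. Qed.

Lemma is_ext f g l : (forall i, f i = g i) -> infinite_sum f l -> infinite_sum g l.
Proof.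
  intros H Hf eps He. destruct (Hf eps He) as [N HN]. exists N. intros n Hn.
  rewrite <- (sum_eq f g n) by auto. auto.
Qed.

Lemma is_shift1 f l : infinite_sum (fun i => f (S i)) l -> infinite_sum f (f O + l).
Proof.
  intros H eps He. destruct (H eps He) as [N HN]. exists (S N). intros n Hn.
  destruct n as [|n]; [lia|]. specialize (HN n ltac:(lia)). rewrite sfr_shift in HN.
  unfold Rdist in *. replace (sum_f_R0 f (S n) - (f 0%nat + l)) with (sum_f_R0 f (S n) - f 0%nat - l) by ring.
  auto.
Qed.

Lemma is_shift2 f l : infinite_sum f l -> infinite_sum (fun i => f (S i)) (l - f O).
Proof.
  intros H eps He. destruct (H eps He) as [N HN]. exists N. intros n Hn.
  specialize (HN (S n) ltac:(lia)). rewrite sfr_shift.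
  unfold Rdist in *. replace (sum_f_R0 f (S n) - f 0%nat - (l - f 0%nat)) with (sum_f_R0 f (S n) - l) by ring.
  auto.
Qed.

Lemma is_scal c f l : infinite_sum f l -> infinite_sum (fun i => c * f i) (c * l).
Proof.
  intros H. change (Un_cv (sum_f_R0 (fun i => c * f i)) (c * l)).
  assert (E : forall N, sum_f_R0 (fun i => c * f i) N = c * sum_f_R0 f N).
  { intros N; induction N; simpl; [ring|]. rewrite IHN; ring. }
  intros eps He. destruct (CV_mult (fun _ => c) (sum_f_R0 f) c l) with (eps := eps) as [N HN]; auto.
  - intros e He'. exists O. intros. unfold Rdist. rewrite Rminus_diag, Rabs_R0. auto.
  - exists N. intros n Hn. rewrite E. apply HN; auto.
Qed.

Lemma is_plus f g a b : infinite_sum f a -> infinite_sum g b -> infinite_sum (fun i => f i + g i) (a + b).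
Proof.
  intros Hf Hg. change (Un_cv (sum_f_R0 (fun i => f i + g i)) (a + b)).
  intros eps He. destruct (CV_plus (sum_f_R0 f) (sum_f_R0 g) a b Hf Hg eps He) as [N HN].
  exists N. intros n Hn. rewrite sum_plus. apply HN; auto.
Qed.

Lemma is_zero : infinite_sum (fun _ => 0) 0.
Proof.
  intros eps He. exists O. intros n _. assert (sum_f_R0 (fun _ => 0) n = 0).
  { induction n; simpl; [auto|]. rewrite IHn; ring. }
  rewrite H. unfold Rdist. rewrite Rminus_diag, Rabs_R0. auto.
Qed.

Lemma is_sumN (F : nat -> nat -> R) v n :
  (forall l, (l < n)%nat -> infinite_sum (F l) (v l)) ->
  infinite_sum (fun i => sumN (fun l => F l i) n) (sumN v n).
Proof.
  induction n; intros H; simpl. apply is_zero.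
  apply is_plus. apply IHn; intros; apply H; lia. apply H; lia.
Qed.

Definition T (n i : nat) : R := ell i (n + i).

Definition Sv (n : nat) : R := epsilon (inhabits 0) (fun v => infinite_sum (T n) v).

Lemma T0 : infinite_sum (T 0) (exp 1).
Proof.
  apply (is_ext (fun k => / INR (fact k) * 1 ^ k)).
  - intros i. unfold T. simpl (0 + i)%nat. rewrite ell_diag, pow1. ring.
  - exact (E1_cvg 1).
Qed.

Lemma T_step n : (forall l, (l < S n)%nat -> infinite_sum (T l) (Sv l)) ->
  infinite_sum (T (S n)) (/ INR (S n) * sumN (fun l => (1 - gam (S n - l)) * Sv l) (S n)).
Proof.
  intros IH.
  replace (/ INR (S n) * sumN (fun l => (1 - gam (S n - l)) * Sv l) (S n)) with
    (T (S n) O + / INR (S n) * sumN (fun l => (1 - gam (S n - l)) * Sv l) (S n)).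
  2:{ unfold T. simpl. ring. }
  apply is_shift1. apply (is_ext (fun i => / INR (S n) * sumN (fun l => (1 - gam (S n - l)) * T l i) (S n))).
  - intros i. symmetry. unfold T at 1. replace (S n + S i)%nat with (S (S n + i)) by lia.
    transitivity (/ INR (S n) * (INR (S n) * ell (S i) (S (S n + i)))).
    { field. apply not_0_INR; lia. }
    rewrite ell_C. f_equal. apply sumN_ext; intros; unfold T; ring.
  - apply is_scal. apply (is_sumN (fun l i => (1 - gam (S n - l)) * T l i)).
    intros l Hl. apply is_scal. apply IH; auto.
Qed.

Lemma Sv_spec : forall n, infinite_sum (T n) (Sv n).
Proof.
  intro n. induction n as [n IH] using lt_wf_ind.
  unfold Sv at 1. apply epsilon_spec.
  destruct n. exists (exp 1); apply T0.
  eexists. apply T_step. exact IH.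
Qed.

Lemma Sv_rec n : INR n * Sv n = sumN (fun l => (1 - gam (n - l)) * Sv l) n.
Proof.
  destruct n. simpl; ring.
  rewrite (uniqueness_sum _ _ _ (Sv_spec (S n)) (T_step n (fun l _ => Sv_spec l))).
  field. apply not_0_INR; lia.
Qed.

Lemma Sv0 : Sv 0 = exp 1.
Proof. apply (uniqueness_sum _ _ _ (Sv_spec 0) T0). Qed.

Lemma gam_eq j : gam j = / (INR j + 1).
Proof. unfold gam. rewrite S_INR. reflexivity. Qed.

Lemma Edd m : INR (S m) * (Sv m - Sv (S m)) =
  Sv 0 * gam (S m) - sumN (fun j => (Sv j - Sv (S j)) * gam (m - j)) m.
Proof.
  set (A := sumN Sv m).
  set (B := sumN (fun l => Sv l * gam (m - l)) m).
  set (C := sumN (fun l => Sv l * gam (S (m - l))) m).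
  set (W := sumN (fun l => Sv l * gam (S m - l)) (S m)).
  assert (R1 : INR m * Sv m = A - B).
  { rewrite Sv_rec. unfold A, B. rewrite sumN_minus. apply sumN_ext; intros; ring. }
  assert (R2 : INR (S m) * Sv (S m) = A - C + Sv m * (1 - gam 1)).
  { rewrite Sv_rec, sumN_S. replace (S m - m)%nat with 1%nat by lia.
    assert (sumN (fun l => (1 - gam (S m - l)) * Sv l) m = A - C).
    { unfold A, C. rewrite sumN_minus. apply sumN_ext; intros l Hl.
      replace (S m - l)%nat with (S (m - l)) by lia. ring. }
    lra. }
  assert (W1 : W = Sv 0 * gam (S m) + sumN (fun j => Sv (S j) * gam (m - j)) m).
  { unfold W. rewrite sumN_first. rewrite Nat.sub_0_r. reflexivity. }
  assert (W2 : W = C + Sv m * gam 1).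
  { unfold W. rewrite sumN_S. replace (S m - m)%nat with 1%nat by lia. f_equal.
    unfold C. apply sumN_ext; intros l Hl. replace (S m - l)%nat with (S (m - l)) by lia. reflexivity. }
  assert (R3 : sumN (fun j => (Sv j - Sv (S j)) * gam (m - j)) m = B - sumN (fun j => Sv (S j) * gam (m - j)) m).
  { unfold B. rewrite sumN_minus. apply sumN_ext; intros; ring. }
  rewrite R3.
  replace (INR (S m) * (Sv m - Sv (S m))) with (INR m * Sv m + Sv m - INR (S m) * Sv (S m))
    by (rewrite S_INR; ring).
  rewrite R1, R2. lra.
Qed.

Lemma Dpos : forall m j, (j <= m)%nat -> 0 < Sv j - Sv (S j).
Proof.
  assert (Hs0 : 0 < Sv 0) by (rewrite Sv0; apply exp_pos).
  induction m; intros j Hj.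
  - replace j with O by lia. assert (E := Edd 0). simpl sumN in E. rewrite gam_eq in E.
    simpl INR in E. assert (0 < Sv 0 * / (1 + 1)) by (apply Rmult_lt_0_compat; lra).
    lra.
  - destruct (Nat.eq_dec j (S m)) as [->|Hne]; [|apply IHm; lia].
    assert (E1 := Edd (S m)). assert (E0 := Edd m).
    rewrite sumN_S in E1. replace (S m - m)%nat with 1%nat in E1 by lia.
    set (d := Sv m - Sv (S m)) in *. set (d' := Sv (S m) - Sv (S (S m))) in *.
    set (M := INR m).
    assert (HM : 0 <= M) by apply pos_INR.
    set (X := sumN (fun j => (Sv j - Sv (S j)) * gam (m - j)) m) in *.
    set (Y := sumN (fun j => (Sv j - Sv (S j)) * gam (S (m - j))) m).
    assert (HY : sumN (fun j => (Sv j - Sv (S j)) * gam (S m - j)) m = Y).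
    { unfold Y. apply sumN_ext; intros l Hl. replace (S m - l)%nat with (S (m - l)) by lia. reflexivity. }
    rewrite HY in E1.
    set (rho := (M + 2) * / (M + 3)).
    set (Q := sumN (fun j => (Sv j - Sv (S j)) * (rho * gam (m - j) - gam (S (m - j)))) m).
    assert (HQ : Q = rho * X - Y).
    { unfold Q, X, Y. rewrite sumN_mul, sumN_minus. apply sumN_ext; intros; ring. }
    assert (Q0 : 0 <= Q).
    { unfold Q. apply sumN_nonneg. intros l Hl. apply Rmult_le_pos.
      - apply Rlt_le, IHm; lia.
      - rewrite !gam_eq, S_INR. set (x := INR (m - l)).
        assert (Hx : x <= M) by (unfold x, M; apply le_INR; lia).
        assert (Hx0 : 0 <= x) by apply pos_INR.
        replace (rho * / (x + 1) - / (x + 1 + 1)) with ((M + 1 - x) * / ((M + 3) * (x + 1) * (x + 2))).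
        2:{ unfold rho. field. lra. }
        apply Rmult_le_pos; [lra|]. apply Rlt_le, Rinv_0_lt_compat.
        apply Rmult_lt_0_compat; [apply Rmult_lt_0_compat|]; lra. }
    assert (Hd : 0 < d) by (apply IHm; lia).
    rewrite !gam_eq in E1, E0. rewrite !S_INR in E1, E0. fold M in E1, E0.
    simpl (INR 1) in E1.
    assert (HX : X = Sv 0 * / (M + 1 + 1) - (M + 1) * d) by lra.
    assert (HY' : Y = rho * X - Q) by lra.
    assert (Key : (M + 1 + 1) * d' = d * / (M + 3) * ((M + 2) * (M + 1) - (M + 3) / 2) + Q).
    { assert (E1' : (M + 1 + 1) * d' = Sv 0 * / (M + 1 + 1 + 1) - Y - d * / (1 + 1)) .
    { rewrite (gam_eq 1), (S_INR m) in E1. fold M in E1. simpl (INR 1) in E1. lra. }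
      rewrite E1', HY', HX. unfold rho. field. lra. }
    assert (P1 : 0 < d * / (M + 3) * ((M + 2) * (M + 1) - (M + 3) / 2)).
    { apply Rmult_lt_0_compat; [apply Rmult_lt_0_compat|]; [lra| apply Rinv_0_lt_compat; lra| nra]. }
    assert (0 < (M + 1 + 1) * d') by lra.
    apply (Rmult_lt_reg_l (M + 1 + 1)); lra.
Qed.

Lemma sq_m1 a : (-1) ^ a * (-1) ^ a = 1.
Proof. rewrite <- Rpow_mult_distr. replace (-1 * -1) with 1 by ring. apply pow1. Qed.

Lemma fcoef k : (1 <= k)%nat -> f_coef k = exp (-1) * Sv k.
Proof.
  intros Hk. destruct k as [|k]; [lia|].
  assert (H : infinite_sum (e_term (S k)) ((-1) ^ S k * Sv (S k))).
  { apply (is_ext (fun i => (-1) ^ S k * T (S k) (S i))).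
    - intros i. unfold T, e_term. rewrite ell_stir. rewrite !pow_add.
      replace ((-1) ^ S k * ((-1) ^ S k * (-1) ^ S i * (-1) ^ S i * IZR (stirling1 (S k + S i) (S i)) /
         INR (fact (S k + S i)))) with
        (((-1) ^ S k * (-1) ^ S k) * ((-1) ^ S i * (-1) ^ S i) * (IZR (stirling1 (S k + S i) (S i)) /
         INR (fact (S k + S i)))) by (unfold Rdiv; ring).
      rewrite !sq_m1. ring.
    - replace (Sv (S k)) with (Sv (S k) - T (S k) O) at 1 by (unfold T; simpl; ring).
      apply is_scal. apply (is_shift2 (T (S k))). apply Sv_spec. }
  unfold f_coef, e_coef.
  rewrite (uniqueness_sum _ _ _ (epsilon_spec (inhabits 0) (fun l => infinite_sum (e_term (S k)) l) (ex_intro _ _ H)) H).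
  replace ((-1) ^ S k * (exp (-1) * ((-1) ^ S k * Sv (S k)))) with
    (((-1) ^ S k * (-1) ^ S k) * (exp (-1) * Sv (S k))) by ring.
  rewrite sq_m1. ring.
Qed.

Theorem mainTheorem1 : forall n : nat, (1 <= n)%nat -> f_coef (S n) < f_coef n.
Proof.
  intros n Hn. rewrite !fcoef by lia.
  apply Rmult_lt_compat_l. apply exp_pos.
  assert (H := Dpos n n (le_n n)). lra.
Qed.
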